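(* For every $\varepsilon>0$ there exists a unit-cost $k$-of-$n$ instance $I$ of Stochastic Score Classification (i.e., $B=2$, $c_j=1$ for all $j$, and $p_j\in(0,1)$ for all $j$) such that $$\mathbb{E}[\mathrm{cost}(\overline{\mathrm{OPT}},I)]\ge\left(\tfrac32-\varepsilon\right)\cdot\mathbb{E}[\mathrm{cost}(\mathrm{OPT},I)],$$ where $\overline{\mathrm{OPT}}$ is an optimal non-adaptive strategy and $\mathrm{OPT}$ an optimal adaptive strategy for $I$.
   Context: An instance $I$ of Stochastic Score Classification (SSC) consists of tests $N=\{1,\dots,n\}$, costs $c_j\ge 0$, success probabilities $p_j\in(0,1)$, and integers $0=t_1<t_2<\dots<t_B<t_{B+1}=n+1$. The outcome vector $x\in\{0,1\}^N$ has independent coordinates with $\Pr[x_j=1]=p_j$. The score $f(x)$ is the unique $i$ with $t_i\le\|x\|_1\le t_{i+1}-1$. A $k$-of-$n$ instance is one with $B=2$ and $t_2=k$. A (possibly adaptive) strategy conducts tests one at a time, each at most once, the choice of the next test possibly depending on outcomes observed so far, and stops as soon as $f(x)$ is determined (all $x'$ agreeing with $x$ on the conducted tests have $f(x')=f(x)$). A non-adaptive strategy is a fixed permutation of $N$: tests are conducted in this order until $f(x)$ is determined. $\mathrm{cost}(S,I)$ is the random total cost of tests conducted by $S$. $\mathrm{OPT}$ (resp. $\overline{\mathrm{OPT}}$) minimizes $\mathbb{E}[\mathrm{cost}(S,I)]$ over all adaptive (resp. non-adaptive) strategies. *)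

(* Defs.v *)
From mathcomp Require Import all_boot all_order all_algebra.
From mathcomp Require Import fingroup perm.
From mathcomp Require Import reals.
Set Implicit Arguments. Unset Strict Implicit. Unset Printing Implicit Defensive.
Import Order.TTheory GRing.Theory Num.Theory.
Local Open Scope ring_scope.

(* An adaptive strategy over tests 'I_n: a decision tree. [Test j t0 t1]
   conducts test j, continuing with t0 if x_j = 0 and t1 if x_j = 1. *)
Inductive dtree (n : nat) : Type :=
  | Stop : dtree n
  | Test : 'I_n -> dtree n -> dtree n -> dtree n.

Section SSC.
Variable R : realType.
Variable n : nat.
(* An SSC instance: costs c, success probabilities p, and the inner thresholds
   ts = [:: t_2; ...; t_B] (t_1 = 0 and t_{B+1} = n+1 implicit). *)
Variables (c : 'I_n -> R) (p : 'I_n -> R) (ts : seq nat).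

(* f(x) = the unique i with t_i <= |x|_1 <= t_{i+1} - 1 (for sorted ts). *)
Definition score (x : {ffun 'I_n -> bool}) : nat :=
  (1 + count (fun t => t <= #|[set j | x j]|) ts)%N.

Definition determined (S : {set 'I_n}) (x : {ffun 'I_n -> bool}) : bool :=
  [forall y : {ffun 'I_n -> bool},
     [forall j in S, y j == x j] ==> (score y == score x)].

Definition prob (x : {ffun 'I_n -> bool}) : R :=
  \prod_j (if x j then p j else 1 - p j).

(* Running a decision tree on x, having already conducted the tests in S:
   stop as soon as f(x) is determined; None signals an invalid run
   (stopping while undetermined, or repeating a test). *)
Fixpoint run (T : dtree n) (x : {ffun 'I_n -> bool}) (S : {set 'I_n})
  : option R :=
  if determined S x then Some 0 else
  match T with
  | Stop => None
  | Test j t0 t1 =>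
      if j \in S then None
      else omap (fun r => c j + r) (run (if x j then t1 else t0) x (j |: S))
  end.

Definition valid_tree (T : dtree n) : Prop :=
  forall x : {ffun 'I_n -> bool}, run T x set0 != None.

Definition exp_cost_tree (T : dtree n) : R :=
  \sum_(x : {ffun 'I_n -> bool}) prob x * odflt 0 (run T x set0).

(* Non-adaptive strategy: a permutation s; test s i is conducted iff the
   tests s 0, ..., s (i-1) do not determine f(x). *)
Definition cost_perm (s : {perm 'I_n}) (x : {ffun 'I_n -> bool}) : R :=
  \sum_(i : 'I_n)
    (if determined [set s j | j in [pred j : 'I_n | (j < i)%N]] x
     then 0 else c (s i)).

Definition exp_cost_perm (s : {perm 'I_n}) : R :=
  \sum_(x : {ffun 'I_n -> bool}) prob x * cost_perm s x.

End SSC.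

(* Main.v *)
Require Import Defs.
From mathcomp Require Import all_boot all_order all_algebra.
From mathcomp Require Import fingroup perm.
From mathcomp Require Import reals.
From mathcomp Require Import ring lra zify.
Set Implicit Arguments. Unset Strict Implicit. Unset Printing Implicit Defensive.
Import Order.TTheory GRing.Theory Num.Theory.
Local Open Scope ring_scope.

Section Gen.
Variables (n k : nat).
Implicit Types (S A : {set 'I_n}) (x y : {ffun 'I_n -> bool}).

Lemma scoreE x : score [:: k] x = (1 + (k <= #|[set j | x j]|))%N.
Proof. by rewrite /score /= addn0. Qed.

Lemma D1 S A x : A \subset S -> (forall j, j \in A -> x j) -> (k <= #|A|)%N ->
  determined [:: k] S x.
Proof.
move=> AS Ax kA; apply/forallP => y; apply/implyP => /forall_inP Hy.
rewrite !scoreE.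
have Hy1 : A \subset [set j | y j].
  by apply/subsetP=> j jA; rewrite inE (eqP (Hy j (subsetP AS j jA))) Ax.
have Hx1 : A \subset [set j | x j].
  by apply/subsetP=> j jA; rewrite inE Ax.
by rewrite (leq_trans kA (subset_leq_card Hy1)) (leq_trans kA (subset_leq_card Hx1)).
Qed.

Lemma D0 S A x : A \subset S -> (forall j, j \in A -> ~~ x j) -> (n < #|A| + k)%N ->
  determined [:: k] S x.
Proof.
move=> AS Ax kA; apply/forallP => y; apply/implyP => /forall_inP Hy.
rewrite !scoreE.
have Hy1 : [set j | y j] \subset ~: A.
  apply/subsetP=> j; rewrite !inE; apply: contraL => jA.
  by rewrite (eqP (Hy j (subsetP AS j jA))) (negbTE (Ax j jA)).
have Hx1 : [set j | x j] \subset ~: A.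
  by apply/subsetP=> j; rewrite !inE; apply: contraL => jA; rewrite (negbTE (Ax j jA)).
have hc := cardsC A; rewrite card_ord in hc.
have e1 := subset_leq_card Hy1; have e2 := subset_leq_card Hx1.
have hk : (#|~: A| < k)%N by rewrite -(ltn_add2l #|A|) hc.
have -> : (k <= #|[set j | y j]|)%N = false by apply/negbTE; rewrite -ltnNge (leq_ltn_trans e1 hk).
have -> : (k <= #|[set j | x j]|)%N = false by apply/negbTE; rewrite -ltnNge (leq_ltn_trans e2 hk).
by [].
Qed.

Lemma ND1 S x : (k <= #|[set j | x j]|)%N -> (#|[set j | x j] :&: S| < k)%N ->
  ~~ determined [:: k] S x.
Proof.
move=> h1 h2; apply/negP => /forallP /(_ [ffun j => (j \in S) && x j]) /implyP H.
have : score [:: k] [ffun j => (j \in S) && x j] == score [:: k] x.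
  apply: H; apply/forall_inP => j jS; by rewrite ffunE jS.
rewrite !scoreE h1.
have -> : [set j | [ffun j => (j \in S) && x j] j] = [set j | x j] :&: S.
  by apply/setP=> j; rewrite !inE ffunE andbC.
by rewrite leqNgt h2.
Qed.

Lemma ND0 S x : (#|[set j | x j]| < k)%N -> (k <= #|[set j | x j] :|: ~: S|)%N ->
  ~~ determined [:: k] S x.
Proof.
move=> h1 h2; apply/negP => /forallP /(_ [ffun j => (j \notin S) || x j]) /implyP H.
have : score [:: k] [ffun j => (j \notin S) || x j] == score [:: k] x.
  apply: H; apply/forall_inP => j jS; by rewrite ffunE jS.
rewrite !scoreE.
have -> : (k <= #|[set j | x j]|)%N = false by rewrite leqNgt h1.
have -> : [set j | [ffun j => (j \notin S) || x j] j] = [set j | x j] :|: ~: S.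
  by apply/setP=> j; rewrite !inE ffunE orbC.
by rewrite h2.
Qed.

Fixpoint lin (l : seq 'I_n) : dtree n :=
  if l is j :: l' then Test j (lin l') (lin l') else Stop n.

Lemma setU_nil S : S :|: [set j in ([::] : seq 'I_n)] = S.
Proof. by apply/setP=> i; rewrite !inE orbF. Qed.

Lemma run_lin (R : realType) (l : seq 'I_n) S x t :
  uniq l -> (forall j, j \in l -> j \notin S) ->
  determined [:: k] (S :|: [set j in take t l]) x ->
  exists r : R, run (fun _ => 1) [:: k] (lin l) x S = Some r /\ r <= t%:R.
Proof.
elim: l S t => [|j l IH] S t /=.
  move=> _ _; rewrite setU_nil.
  by move=> ->; exists 0; split => //; rewrite ler0n.
move=> /andP[jl ul] Hd.
case: ifP => [_|nd]; first by exists 0; split => //; rewrite ler0n.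
case: t => [|t].
  by rewrite /= setU_nil nd.
rewrite /= (negbTE (Hd j (mem_head _ _))) if_same => Hdet.
have H1 : forall i, i \in l -> i \notin j |: S.
  move=> i il; rewrite !inE negb_or Hd ?inE ?il ?orbT // andbT.
  by apply: contraNneq jl => <-.
have H2 : determined [:: k] (j |: S :|: [set j0 in take t l]) x.
  suff -> : j |: S :|: [set j0 in take t l] = S :|: [set j0 in j :: take t l] by [].
  apply/setP=> i; rewrite !inE; by case: (i == j); rewrite ?orbT.
have [r [-> hr]] := IH (j |: S) t ul H1 H2.
by exists (1 + r); split => //; rewrite -addn1 natrD addrC lerD2r.
Qed.

End Gen.


Section Inst.
Variable m : nat.
Local Notation N := (m + m).+1.

Definition Hs : seq 'I_N := [seq inord t | t <- iota 1 m].
Definition Ls : seq 'I_N := [seq inord t | t <- iota m.+1 m].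

Lemma memH (j : 'I_N) : (j \in Hs) = (0 < j <= m)%N.
Proof.
apply/mapP/idP => [[t]|/andP[j0 jm]].
  rewrite mem_iota => /andP[t1 tm] ->; rewrite inordK; lia.
exists (nat_of_ord j); first by rewrite mem_iota; lia.
by rewrite inord_val.
Qed.

Lemma memL (j : 'I_N) : (j \in Ls) = (m < j)%N.
Proof.
have jN := ltn_ord j.
apply/mapP/idP => [[t]|jm].
  rewrite mem_iota => /andP[t1 tm] ->; rewrite inordK; lia.
exists (nat_of_ord j); first by rewrite mem_iota; lia.
by rewrite inord_val.
Qed.

Lemma uniqH : uniq Hs.
Proof.
rewrite map_inj_in_uniq ?iota_uniq // => a b; rewrite !mem_iota => ha hb.
move/(congr1 (@nat_of_ord _)); rewrite !inordK; lia.
Qed.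

Lemma uniqL : uniq Ls.
Proof.
rewrite map_inj_in_uniq ?iota_uniq // => a b; rewrite !mem_iota => ha hb.
move/(congr1 (@nat_of_ord _)); rewrite !inordK; lia.
Qed.

Lemma sizeH : size Hs = m. Proof. by rewrite size_map size_iota. Qed.
Lemma sizeL : size Ls = m. Proof. by rewrite size_map size_iota. Qed.

Lemma cardHs : #|[set j in Hs]| = m.
Proof. by rewrite cardsE (card_uniqP uniqH) sizeH. Qed.
Lemma cardLs : #|[set j in Ls]| = m.
Proof. by rewrite cardsE (card_uniqP uniqL) sizeL. Qed.

Lemma card0H : #|ord0 |: [set j in Hs]| = m.+1.
Proof. by rewrite cardsU1 cardHs inE memH. Qed.
Lemma card0L : #|ord0 |: [set j in Ls]| = m.+1.
Proof. by rewrite cardsU1 cardLs inE memL. Qed.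


Definition x1 : {ffun 'I_N -> bool} := [ffun j : 'I_N => (j <= m)%N].
Definition x0 : {ffun 'I_N -> bool} := [ffun j : 'I_N => (0 < j <= m)%N].
Definition Aset : {set 'I_N} := ord0 |: [set j in Hs].
Definition Bset : {set 'I_N} := ord0 |: [set j in Ls].

Lemma ones_x1 : [set j | x1 j] = Aset.
Proof. apply/setP=> j; rewrite !inE ffunE memH; case: (eqVneq j ord0) => [->//|/negbTE]. 
move=> h; have : (nat_of_ord j != 0)%N by apply: contraFneq h => e; apply/eqP/val_inj.
by rewrite /=; lia.
Qed.

Lemma ones_x0 : [set j | x0 j] = [set j in Hs].
Proof. by apply/setP=> j; rewrite !inE ffunE memH. Qed.

Lemma cover j : (j \in Aset) || (j \in Bset).
Proof. rewrite !inE memH memL; case: (eqVneq j ord0) => //= h.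
have : (nat_of_ord j != 0)%N by apply: contra_neq h => e; apply/val_inj.
lia.
Qed.

Lemma card_pred_lt (i : 'I_N) : (#|[pred j : 'I_N | (j < i)%N]| <= i)%N.
Proof.
have le : (i <= N)%N by apply: ltnW.
have inj : injective (widen_ord le) by move=> a b /(congr1 (@nat_of_ord _)) e; apply: val_inj.
rewrite -{2}(card_ord i) -(card_codom inj); apply: subset_leq_card.
apply/subsetP=> j; rewrite inE => ji; apply/codomP; exists (Ordinal ji).
by apply: val_inj.
Qed.

Lemma notA (P : {set 'I_N}) : ~~ (Aset \subset P) -> ~~ determined [:: m.+1] P x1.
Proof.
move=> nAP; apply: ND1; rewrite ones_x1 /Aset ?card0H //.
rewrite -card0H; apply: proper_card; rewrite properEneq subsetIl andbT.
by apply: contra nAP => /eqP e; rewrite /Aset -e subsetIr.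
Qed.

Lemma notB (P : {set 'I_N}) : ~~ (Bset \subset P) -> ~~ determined [:: m.+1] P x0.
Proof.
case/subsetPn => b bB bP; apply: ND0; rewrite ones_x0 ?cardHs //.
have hb : b \notin [set j in Hs].
  move: bB; rewrite !inE memH memL; case: (eqVneq b ord0) => [->//|h] /=.
  lia.
apply: (@leq_trans #|b |: [set j in Hs]|).
  by rewrite cardsU1 hb cardHs.
apply: subset_leq_card; apply/subsetP => j; rewrite !inE.
by case/orP => [/eqP->|->]; rewrite ?bP ?orbT.
Qed.

Variable R : realType.

Lemma term_bound (s : {perm 'I_N}) (i : 'I_N) :
  ((if (i <= m)%N then 2 else 1)%:R : R) <=
  (if determined [:: m.+1] [set s j | j in [pred j : 'I_N | (j < i)%N]] x1 then 0 else 1) +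
  (if determined [:: m.+1] [set s j | j in [pred j : 'I_N | (j < i)%N]] x0 then 0 else 1).
Proof.
set P := [set s j | j in _].
have siP : s i \notin P.
  apply/imsetP => [[j]]; rewrite inE => ji /perm_inj e; by rewrite e ltnn in ji.
have cardP : (#|P| <= i)%N := leq_trans (leq_imset_card _ _) (card_pred_lt i).
case: ifP => hi.
  have nA : ~~ (Aset \subset P).
    apply/negP => /subset_leq_card; rewrite /Aset card0H; lia.
  have nB : ~~ (Bset \subset P).
    apply/negP => /subset_leq_card; rewrite /Bset card0L; lia.
  rewrite (negbTE (notA nA)) (negbTE (notB nB)); lra.
case/orP: (cover (s i)) => h.
  have nA : ~~ (Aset \subset P) by apply: contra siP => /subsetP; apply.
  rewrite (negbTE (notA nA)); case: ifP => _; lra.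
have nB : ~~ (Bset \subset P) by apply: contra siP => /subsetP; apply.
rewrite (negbTE (notB nB)); case: ifP => _; lra.
Qed.

Lemma cost_sum (s : {perm 'I_N}) :
  ((3 * m + 2)%:R : R) <= cost_perm (fun _ => 1) [:: m.+1] s x1 + cost_perm (fun _ => 1) [:: m.+1] s x0.
Proof.
rewrite /cost_perm -big_split /=.
apply: le_trans (ler_sum _ (fun i _ => term_bound s i)).
rewrite -natr_sum ler_nat.
have -> : (\sum_(i < N) (if (i <= m)%N then 2 else 1) = \sum_(i < N) (1 + (i <= m)%N))%N.
  by apply: eq_bigr => i _; case: ifP.
rewrite big_split /= sum1_card card_ord -big_mkcond /= sum1_card.
have -> : #|[pred i : 'I_N | (i <= m)%N]| = #|[set j | x1 j]|.
  by rewrite cardsE; apply: eq_card => j; rewrite !inE -topredE /= ffunE.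
rewrite ones_x1 /Aset card0H; lia.
Qed.

Definition Tr : dtree N := Test ord0 (lin (Ls ++ Hs)) (lin (Hs ++ Ls)).

Definition good (x : {ffun 'I_N -> bool}) :=
  [forall j : 'I_N, (j != ord0) ==> (x j == (j <= m)%N)].

Lemma uniqHL : uniq (Hs ++ Ls).
Proof.
rewrite cat_uniq uniqH uniqL andbT /=; apply/hasPn => j; rewrite memL => jm.
by rewrite memH; lia.
Qed.

Lemma uniqLH : uniq (Ls ++ Hs).
Proof.
rewrite cat_uniq uniqH uniqL andbT /=; apply/hasPn => j; rewrite memH => jm.
by rewrite memL; lia.
Qed.

Lemma nz_of (j : 'I_N) : (0 < j)%N -> j != ord0.
Proof. by move=> h; apply/eqP => e; rewrite e in h. Qed.

Lemma nin0HL j : j \in Hs ++ Ls -> j \notin [set ord0].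
Proof.
rewrite mem_cat memH memL inE => h; apply: nz_of; lia.
Qed.

Lemma nin0LH j : j \in Ls ++ Hs -> j \notin [set ord0].
Proof.
rewrite mem_cat memH memL inE => h; apply: nz_of; lia.
Qed.

Lemma det_full (x : {ffun 'I_N -> bool}) S : S = setT -> determined [:: m.+1] S x.
Proof.
move=> ->; apply/forallP => y; apply/implyP => /forall_inP H.
rewrite (_ : y = x) //; apply/ffunP => j; apply/eqP; exact: H j (in_setT j).
Qed.

Lemma cov (l : seq 'I_N) : (forall j, j != ord0 -> j \in l) ->
  [set ord0] :|: [set j in take (size l) l] = setT.
Proof.
move=> h; rewrite take_size; apply/setP => j; rewrite !inE.
by case: (eqVneq j ord0) => //= /h.
Qed.

Lemma covHL j : j != ord0 -> j \in Hs ++ Ls.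
Proof.
move=> h; have : (nat_of_ord j != 0)%N by apply: contra_neq h => e; apply/val_inj.
rewrite mem_cat memH memL; lia.
Qed.

Lemma covLH j : j != ord0 -> j \in Ls ++ Hs.
Proof. by move/covHL; rewrite !mem_cat orbC. Qed.

Lemma run_bound (l : seq 'I_N) x : uniq l -> (forall j, j \in l -> j \notin [set ord0]) ->
  (forall j, j != ord0 -> j \in l) -> size l = (m + m)%N ->
  exists r : R, run (fun _ => 1) [:: m.+1] (lin l) x [set ord0] = Some r /\
    r <= (m + m)%:R /\
    (determined [:: m.+1] ([set ord0] :|: [set j in take m l]) x -> r <= m%:R).
Proof.
move=> ul nl cl sl.
have [r [e hr]] := @run_lin N m.+1 R l [set ord0] x (size l) ul nl (det_full x (cov cl)).
exists r; split => //; split; first by rewrite -sl.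
move=> D; have [r' [e' hr']] := @run_lin N m.+1 R l [set ord0] x m ul nl D.
by move: e'; rewrite e => -[->].
Qed.

Lemma tree_run x : exists r : R, run (fun _ => 1) [:: m.+1] Tr x set0 = Some r /\
   r <= N%:R /\ (good x -> r <= m.+1%:R).
Proof.
rewrite /Tr /=.
case: ifP => [_|nd]; first by exists 0; rewrite !ler0n.
rewrite in_set0 setU0.
case hx: (x ord0).
  have [r [-> [h1 h2]]] := run_bound x uniqHL nin0HL covHL (etrans (size_cat _ _) (congr2 addn (sizeH) (sizeL))).
  exists (1 + r); split => //; split; first by rewrite -addn1 natrD; lra.
  move=> g; rewrite -addn1 natrD addrC lerD2r; apply: h2.
  rewrite take_size_cat ?sizeH //; apply: (@D1 _ _ _ (ord0 |: [set j in Hs])) => //.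
    move=> j; rewrite !inE; case/orP => [/eqP ->//|jH].
    have := forallP g j; rewrite memH in jH; rewrite (nz_of (j:=j)) ?implyTb; last by case/andP: jH.
    by move/eqP ->; case/andP: jH.
  by rewrite card0H.
have [r [-> [h1 h2]]] := run_bound x uniqLH nin0LH covLH (etrans (size_cat _ _) (congr2 addn (sizeL) (sizeH))).
exists (1 + r); split => //; split; first by rewrite -addn1 natrD; lra.
move=> g; rewrite -addn1 natrD addrC lerD2r; apply: h2.
rewrite take_size_cat ?sizeL //; apply: (@D0 _ _ _ (ord0 |: [set j in Ls])) => //.
  move=> j; rewrite !inE; case/orP => [/eqP ->//|jH]; first by rewrite hx.
  have := forallP g j; rewrite memL in jH; rewrite (nz_of (j:=j)) ?implyTb; last by lia.
  by move/eqP ->; rewrite -ltnNge.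
by rewrite card0L; lia.
Qed.

Variable d : R.
Hypotheses (d0 : 0 < d) (d1 : d < 1).
Ltac dlra := let h0 := fresh in let h1 := fresh in have h0 := d0; have h1 := d1; lra.
Ltac dnra := let h0 := fresh in let h1 := fresh in have h0 := d0; have h1 := d1; nra.

Definition pp (j : 'I_N) : R := if j == ord0 then 1/2 else if (j <= m)%N then 1 - d else d.
Definition hh (j : 'I_N) (b : bool) : R :=
  if j == ord0 then 1 else if b == (j <= m)%N then 1 else 0.
Definition aa : R := \prod_(j : 'I_N) (if j == ord0 then 1 else 1 - d).

Lemma pp01 j : 0 < pp j < 1.
Proof. rewrite /pp; case: ifP => _; [|case: ifP => _]; apply/andP; split; dlra. Qed.

Lemma fac_ge0 j (b : bool) : 0 <= (if b then pp j else 1 - pp j).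
Proof. by have /andP[h1 h2] := pp01 j; case: b; dlra. Qed.

Lemma prob_ge0 x : 0 <= prob pp x.
Proof. by apply: prodr_ge0 => j _; apply: fac_ge0. Qed.

Lemma sumP : \sum_x prob pp x = 1.
Proof.
rewrite /prob -(@bigA_distr_bigA _ _ _ _ _ _ _ (fun j (b : bool) => if b then pp j else 1 - pp j)) /=.
by apply: big1 => j _; rewrite big_bool /=; dlra.
Qed.

Lemma sumG : \sum_x prob pp x * \prod_j hh j (x j) = aa.
Proof.
rewrite /prob.
under eq_bigr => x _ do rewrite -big_split /=.
rewrite -(@bigA_distr_bigA _ _ _ _ _ _ _ (fun j (b : bool) => (if b then pp j else 1 - pp j) * hh j b)) /=.
apply: eq_bigr => j _; rewrite big_bool /= /hh /pp.
case: ifP => _; first dlra.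
by case: ifP => _ /=; dlra.
Qed.

Lemma prob_x (x : {ffun 'I_N -> bool}) : x = x1 \/ x = x0 -> prob pp x = aa / 2.
Proof.
move=> hx; rewrite /prob /aa (bigD1 ord0) //= [in RHS](bigD1 ord0) //= ?eqxx.
have -> : \prod_(j < N | j != ord0) (if x j then pp j else 1 - pp j) =
          \prod_(j < N | j != ord0) (if j == ord0 then 1 else 1 - d).
  apply: eq_bigr => j jn; rewrite (negbTE jn) /pp (negbTE jn).
  have jpos : (0 < j)%N by rewrite lt0n; apply: contra_neq jn => e; apply/val_inj.
  by case: hx => ->; rewrite ffunE ?jpos /=; case: (j <= m)%N; dlra.
have -> : (if x ord0 then pp ord0 else 1 - pp ord0) = 1/2.
  by rewrite /pp eqxx; case: hx => ->; rewrite ffunE /=; dlra.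
dlra.
Qed.

Lemma bern K : 1 - K%:R * d <= (1 - d) ^+ K.
Proof.
elim: K => [|K IH]; first by rewrite expr0 mul0r subr0.
rewrite exprS -addn1 natrD.
have h : 0 <= (1 - d) * ((1 - d) ^+ K - (1 - K%:R * d)) by apply: mulr_ge0; dlra.
have hk : 0 <= K%:R * d * d by rewrite -mulrA; apply: mulr_ge0; [exact: ler0n | apply: mulr_ge0; dlra].
dnra.
Qed.

Lemma aaE : aa = (1 - d) ^+ (m + m).
Proof.
rewrite /aa (bigD1 ord0) //= ?eqxx mul1r.
rewrite (eq_bigr (fun _ => 1 - d)); last by move=> j /negbTE ->.
rewrite prodr_const; congr (_ ^+ _).
by rewrite (@eq_card _ _ (predC1 ord0)) // cardC1 card_ord.
Qed.

Lemma aa_bounds : 1 - (m + m)%:R * d <= aa /\ aa <= 1 /\ 0 <= aa.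
Proof.
rewrite aaE; split; first exact: bern.
split; last by apply: exprn_ge0; dlra.
by apply: exprn_ile1; dlra.
Qed.

Lemma tree_exp : exp_cost_tree (fun _ => 1) pp [:: m.+1] Tr <= N%:R - m%:R * aa.
Proof.
rewrite /exp_cost_tree.
apply: (@le_trans _ _ (\sum_x prob pp x * (N%:R - m%:R * \prod_j hh j (x j)))).
  apply: ler_sum => x _; apply: (ler_wpM2l (prob_ge0 x)).
  have [r [-> [h1 h2]]] := tree_run x; rewrite /=.
  have eN : N%:R = m%:R + m.+1%:R :> R by rewrite -natrD; congr (_%:R); lia.
  case g: (good x).
    have -> : \prod_j hh j (x j) = 1.
      apply: big1 => j _; rewrite /hh; case: ifP => // /negbT jn.
      by have := forallP g j; rewrite jn /= => /eqP ->; rewrite eqxx.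
    have := h2 g; dlra.
  move/negbT: g => /forallPn [j]; rewrite negb_imply => /andP[jn hj].
  rewrite (bigD1 j) //= /hh (negbTE jn) (negbTE hj) mul0r.
  dlra.
have -> : \sum_x prob pp x * (N%:R - m%:R * \prod_j hh j (x j)) =
   N%:R * \sum_x prob pp x - m%:R * \sum_x prob pp x * \prod_j hh j (x j).
  rewrite mulr_sumr mulr_sumr -sumrB; apply: eq_bigr => x _; ring.
by rewrite sumP sumG mulr1.
Qed.

Lemma cost_ge0 (s : {perm 'I_N}) (x : {ffun 'I_N -> bool}) : 0 <= cost_perm (fun _ => 1 : R) [:: m.+1] s x.
Proof. by apply: sumr_ge0 => i _; case: ifP => _; dlra. Qed.

Lemma perm_exp (s : {perm 'I_N}) :
  aa / 2 * (3 * m + 2)%:R <= exp_cost_perm (fun _ => 1) pp [:: m.+1] s.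
Proof.
have ne : x0 != x1 by apply/eqP => /ffunP /(_ ord0); rewrite !ffunE.
rewrite /exp_cost_perm (bigD1 x1) //= (bigD1 x0) //=.
have hr : 0 <= \sum_(i | (i != x1) && (i != x0)) prob pp i * cost_perm (fun _ => 1) [:: m.+1] s i.
  by apply: sumr_ge0 => x _; apply: mulr_ge0; [apply: prob_ge0|apply: cost_ge0].
rewrite !prob_x; [|by right|by left].
have := cost_sum s; have [_ [_ ha]] := aa_bounds.
move=> hc.
have : 0 <= aa / 2 * (cost_perm (fun _ => 1) [:: m.+1] s x1 +
   cost_perm (fun _ => 1) [:: m.+1] s x0 - (3 * m + 2)%:R).
  by apply: mulr_ge0; dlra.
dlra.
Qed.

End Inst.


Lemma run_ge0 (R : realType) n ts (T : dtree n) x S (r : R) :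
  run (fun _ => 1) ts T x S = Some r -> 0 <= r.
Proof.
elim: T S r => [|j t0 IH0 t1 IH1] S r /=.
  by case: ifP => // _ [<-].
case: ifP => [_ [<-] //|_]; case: ifP => // _.
case: (x j).
  case e: (run _ _ t1 _ _) => [r'|] //= [<-]; have := IH1 _ _ e; lra.
case e: (run _ _ t0 _ _) => [r'|] //= [<-]; have := IH0 _ _ e; lra.
Qed.

Theorem theorem3 (R : realType) (eps : R) :
  0 < eps ->
  exists (n k : nat) (p : 'I_n -> R),
    [/\ (0 < k <= n)%N,
        (forall j, 0 < p j < 1) &
        exists T : dtree n,
          valid_tree (fun _ => 1 : R) [:: k] T /\
          forall s : {perm 'I_n},
            exp_cost_perm (fun _ => 1 : R) p [:: k] s >=
            (3 / 2 - eps) * exp_cost_tree (fun _ => 1 : R) p [:: k] T].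
Proof.
move=> he.
set m := Num.Def.archi_bound eps^-1.
have hm : eps^-1 < m%:R by apply: archi_boundP; rewrite invr_ge0 ltW.
set M : R := m%:R.
have Mpos : 0 < M by apply: lt_trans hm; rewrite invr_gt0.
have mpos : (0 < m)%N by rewrite -(ltr0n R).
have M1 : 1 <= M by rewrite /M (ler1n R).
have em : 1 < eps * M by rewrite -(ltr_pM2l he) mulfV ?gt_eqF // in hm.
set D : R := (4 * m * (3 * m + 1))%:R.
have DE : D = 4 * M * (3 * M + 1) by rewrite /D /M !natrM natrD natrM.
have D1 : 1 < D by rewrite DE; nra.
set d : R := D^-1.
have d0 : 0 < d by rewrite invr_gt0; lra.
have d1 : d < 1 by rewrite /d invf_lt1 //; lra.
have hd : d * D = 1 by rewrite mulVf // gt_eqF //; lra.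
exists (m + m).+1, m.+1, (@pp m R d); split.
- lia.
- move=> j; exact: (pp01 d0 d1).
exists (Tr m); split.
  by move=> x; have [r [-> _]] := tree_run R x.
move=> s.
have hP := @perm_exp m R d d0 d1 s.
have hT := tree_exp m d0 d1.
have [ha1 [ha2 ha3]] := aa_bounds m d0 d1.
have TE0 : 0 <= exp_cost_tree (fun _ => 1 : R) (@pp m R d) [:: m.+1] (Tr m).
  apply: sumr_ge0 => x _; apply: mulr_ge0; first exact: (prob_ge0 d0 d1).
  by have [r [e _]] := tree_run R x; rewrite e /=; exact: run_ge0 e.
have e1 : (3 * m + 2)%:R = 3 * M + 2 :> R by rewrite natrD natrM.
have e2 : ((m + m).+1)%:R = 2 * M + 1 :> R by rewrite -addn1 !natrD; lra.
have e3 : (m + m)%:R = 2 * M :> R by rewrite natrD; lra.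
rewrite e1 in hP; rewrite e2 in hT; rewrite e3 in ha1.
set a := aa m d in hP hT ha1 ha2 ha3.
set PE := exp_cost_perm _ _ _ _ in hP *.
set TE := exp_cost_tree _ _ _ _ in hT TE0 *.
have f1 : 0 <= eps * M * (1 - a) by apply: mulr_ge0; [apply: mulr_ge0|]; lra.
have f2 : 0 <= (2 * M * d - (1 - a)) * (3 * M + 1) by apply: mulr_ge0; lra.
have PE0 : 0 <= PE by apply: le_trans hP; apply: mulr_ge0; lra.
case: (lerP eps (3/2)) => he2.
  have : (3/2 - eps) * TE <= (3/2 - eps) * (2 * M + 1 - M * a).
    by apply: ler_wpM2l; lra.
  rewrite DE in hd.
  lra.
have : (3/2 - eps) * TE <= 0 by apply: mulr_le0_ge0 => //; lra.
lra.
Qed.
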